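(* Let $\mathbb{D}$ be a division ring, let $2\le m,n<\infty$, let $P$ be an $n\times m$ matrix over $\mathbb{D}$ with $\operatorname{rank}P=r$, and let $\mathcal{A}=\mathfrak{M}(\mathbb{D}, m, n, P)$. If $r=\min\{m,n\}$, then $\mathcal{A}=\sum^2[\mathcal{A},\mathcal{A}][\mathcal{A},\mathcal{A}]$; that is, $\xi(\mathcal{A})\le 2$.
   Context: $\mathfrak{M}(\mathbb{D}, m, n, P)$ denotes the ring of all $m\times n$ matrices over the division ring $\mathbb{D}$ with entrywise addition and multiplication $A\bullet B = APB$. The commutator is $[x,y]=x\bullet y-y\bullet x$; $[X,Y]=\{[x,y]:x\in X,y\in Y\}$, $XY=\{x\bullet y:x\in X,y\in Y\}$, and $\sum^N S$ denotes the set of sums of $N$ elements of $S$. For a ring $\mathbb{R}$ for which some $N\in\mathbb{N}$ satisfies $\mathbb{R}=\sum^N[\mathbb{R},\mathbb{R}][\mathbb{R},\mathbb{R}]$, $\xi(\mathbb{R})$ is the least such $N$. *)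

(* Defs.v *)
From HB Require Import structures.
From mathcomp Require Import all_boot all_order all_algebra.
Set Implicit Arguments. Unset Strict Implicit. Unset Printing Implicit Defensive.
Import GRing.Theory.
Local Open Scope ring_scope.

Definition is_division_ring (D : unitRingType) : Prop :=
  forall x : D, x != 0 -> x \is a GRing.unit.

Definition rows_indep (D : unitRingType) (n m : nat) (P : 'M[D]_(n, m))
  (S : {set 'I_n}) : Prop :=
  forall c : 'rV[D]_n, (forall i, i \notin S -> c 0 i = 0) -> c *m P = 0 -> c = 0.

(* rank P = r : the maximal number of left-linearly independent rows of P is r
   (row rank; over a division ring it equals the column rank). *)
Definition div_rank (D : unitRingType) (n m : nat) (P : 'M[D]_(n, m)) (r : nat) : Prop :=
  (exists S : {set 'I_n}, rows_indep P S /\ #|S| = r) /\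
  (forall S : {set 'I_n}, rows_indep P S -> (#|S| <= r)%N).

(* Multiplication in M(D, m, n, P): A . B = A P B. *)
Definition sandmul (D : unitRingType) (m n : nat) (P : 'M[D]_(n, m))
  (A B : 'M[D]_(m, n)) : 'M[D]_(m, n) := A *m P *m B.

Definition sandcomm (D : unitRingType) (m n : nat) (P : 'M[D]_(n, m))
  (A B : 'M[D]_(m, n)) : 'M[D]_(m, n) := sandmul P A B - sandmul P B A.

(* Main.v *)
Require Import Defs.
From mathcomp Require Import all_boot all_order all_algebra.
Set Implicit Arguments. Unset Strict Implicit. Unset Printing Implicit Defensive.
Import GRing.Theory.
Local Open Scope ring_scope.

Lemma sum_deltal (D : pzRingType) k (l0 : 'I_k) (F : 'I_k -> D) :
  \sum_(l < k) ((l0 == l)%:R * F l) = F l0.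
Proof.
rewrite (bigD1 l0) //= eqxx mul1r big1 ?addr0 // => l Hl.
by rewrite eq_sym (negbTE Hl) mul0r.
Qed.

Lemma sum_deltar (D : pzRingType) k (l0 : 'I_k) (F : 'I_k -> D) :
  \sum_(l < k) (F l * (l0 == l)%:R) = F l0.
Proof.
rewrite (bigD1 l0) //= eqxx mulr1 big1 ?addr0 // => l Hl.
by rewrite eq_sym (negbTE Hl) mulr0.
Qed.

Lemma mx_nz (D : pzRingType) m n (A : 'M[D]_(m, n)) :
  A != 0 -> exists i j, A i j != 0.
Proof.
move=> HA; case: (pickP (fun ij : 'I_m * 'I_n => A ij.1 ij.2 != 0)) => [[i j] H|H].
  by exists i, j.
case/eqP: HA; apply/matrixP => i j; rewrite mxE; by have := H (i, j); rewrite /= => /negbFE /eqP.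
Qed.

Lemma rowcol1 (D : unitRingType) m (w : 'rV[D]_m) j : w 0 j \is a GRing.unit ->
  w *m (\matrix_(a, b) ((w 0 j)^-1 * (j == a)%:R) : 'cV_m) = 1%:M.
Proof.
move=> Hu; apply/matrixP => a b; rewrite !ord1 !mxE.
rewrite (eq_bigr (fun l => w 0 l * (w 0 j)^-1 * (j == l)%:R)); last first.
  by move=> l _; rewrite mxE mulrA.
by rewrite sum_deltar divrr.
Qed.

Lemma L1 (D : unitRingType) (hD : is_division_ring D) n m (P : 'M[D]_(n, m)) :
  (forall c : 'rV_n, c *m P = 0 -> c = 0) -> exists Q : 'M_(m, n), P *m Q = 1%:M.
Proof.
elim: n P => [|n IH].
  by move=> P HP; exists 0; rewrite !flatmx0.
rewrite -[n.+1]/(1 + n)%N => P HP.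
pose p : 'M_(1, m) := usubmx P.
pose P' : 'M_(n, m) := dsubmx P.
have eP : P = col_mx p P' by rewrite vsubmxK.
have HP' : forall c : 'rV_n, c *m P' = 0 -> c = 0.
  move=> c Hc.
  have := HP (row_mx (0 : 'rV_1) c); rewrite eP mul_row_col mul0mx add0r Hc => /(_ erefl) H.
  by have := congr1 rsubmx H; rewrite row_mxKr => ->; rewrite linear0.
have [Q' HQ'] := IH P' HP'.
pose w := p - p *m Q' *m P'.
have wn0 : w != 0.
  apply/eqP => Hw.
  have := HP (row_mx 1%:M (- (p *m Q'))).
  rewrite eP mul_row_col mul1mx mulNmx -mulmxA.
  move: Hw; rewrite /w -mulmxA => /eqP; rewrite subr_eq0 => /eqP <-.
  rewrite subrr => /(_ erefl) H.
  have := congr1 lsubmx H; rewrite row_mxKl => /matrixP /(_ 0 0).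
  by rewrite !mxE /= mulr1n => /eqP; rewrite oner_eq0.
have [i [j Hij]] := mx_nz wn0.
have Hu : w i j \is a GRing.unit by apply: hD.
pose v : 'cV_m := \matrix_(a, b) ((w 0 j)^-1 * (j == a)%:R).
have wv : w *m v = 1%:M.
  by apply: rowcol1; rewrite -(ord1 i).
pose q := v - Q' *m (P' *m v).
have P'q : P' *m q = 0 by rewrite /q mulmxBr (mulmxA P' Q') HQ' mul1mx subrr.
have pq : p *m q = 1%:M.
  by rewrite /q mulmxBr !mulmxA -mulmxBl.
pose Q'' := Q' - q *m (p *m Q').
exists (row_mx q Q'' : 'M_(m, 1 + n)%N).
rewrite eP mul_col_row P'q pq /Q'' mulmxBr mulmxBr HQ' (mulmxA p q) pq mul1mx subrr.
by rewrite (mulmxA P' q) P'q mul0mx subr0 scalar_mx_block.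
Qed.

Lemma L0 (D : unitRingType) (hD : is_division_ring D) n m (P : 'M[D]_(n, m)) :
  (forall c : 'rV_n, c *m P = 0 -> c = 0) -> (n <= m)%N.
Proof.
elim: n m P => [|n IH] m; first by [].
rewrite -[n.+1]/(1 + n)%N => P HP.
pose p : 'M_(1, m) := usubmx P.
pose P' : 'M_(n, m) := dsubmx P.
have eP : P = col_mx p P' by rewrite vsubmxK.
have pn0 : p != 0.
  apply/eqP => Hp.
  have := HP (row_mx (1%:M : 'M_1) 0).
  rewrite eP mul_row_col mul1mx mul0mx addr0 Hp => /(_ erefl) H.
  have := congr1 lsubmx H; rewrite row_mxKl => /matrixP /(_ 0 0).
  by rewrite !mxE /= mulr1n => /eqP; rewrite oner_eq0.
have [i [j Hpj]] := mx_nz pn0.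
case: m j P HP p P' eP pn0 i Hpj => [|m'] j; first by case: j.
move=> P HP p P' eP pn0 i Hpj.
have Hu : p 0 j \is a GRing.unit by apply: hD; move: Hpj; rewrite (ord1 i).
pose al := (p 0 j)^-1.
pose R := P' - col j P' *m (al%:M *m p).
have Rj : forall a, R a j = 0.
  move=> a; rewrite /R mul_scalar_mx !mxE big_ord1 !mxE.
  by rewrite mulVr // mulr1 subrr.
suff : (n <= m')%N by [].
apply: IH (col' j R) _ => c Hc.
have cR : c *m R = 0.
  apply/matrixP => a l; rewrite [RHS]mxE.
  case: (unliftP j l) => [l'|] ->.
    transitivity ((c *m col' j R) a l'); last by rewrite Hc mxE.
    by rewrite !mxE; apply: eq_bigr => k _; rewrite /col' [in RHS]mxE.
  by rewrite mxE big1 // => k _; rewrite Rj mulr0.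
have := HP (row_mx (- (c *m col j P' *m al%:M)) c).
rewrite eP mul_row_col mulNmx addrC -(mulmxA _ al%:M) -mulmxA -mulmxBr -/R cR.
move=> /(_ erefl) H.
by have := congr1 rsubmx H; rewrite row_mxKr linear0.
Qed.

Lemma DF (D : unitRingType) (hD : is_division_ring D) k (M T : 'M[D]_k) :
  M *m T = 1%:M -> T *m M = 1%:M.
Proof.
move=> HMT.
pose E := 1%:M - T *m M.
have ME : M *m E = 0 by rewrite /E mulmxBr mulmx1 mulmxA HMT mul1mx subrr.
have EE : E *m E = E.
  rewrite /E mulmxBl mul1mx mulmxBr mulmx1 !mulmxA -(mulmxA T M T) HMT mulmx1.
  by rewrite subrr subr0.
suff E0 : E = 0 by apply/eqP; rewrite -subr_eq0 -oppr_eq0 opprB; apply/eqP.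
clearbody E; apply/eqP/negPn/negP => En0.
have [i [j Hij]] := mx_nz En0.
have Hu : E i j \is a GRing.unit by apply: hD.
pose e := row i E.
have eE : e *m E = e by rewrite /e -row_mul EE.
suff : (k + 1 <= k)%N by rewrite addn1 ltnn.
apply: (@L0 D hD (k + 1)%N k (col_mx M e)) => c Hc.
rewrite -(hsubmxK c) in Hc *.
move: Hc; rewrite mul_row_col => Hc.
have be : rsubmx c *m e = 0.
  have := congr1 (mulmx^~ E) Hc.
  by rewrite /= mulmxDl -!mulmxA ME mulmx0 add0r eE mul0mx.
have b0 : rsubmx c = 0.
  apply/matrixP => a b; rewrite !ord1 mxE.
  move/matrixP: be => /(_ 0 j); rewrite !mxE big_ord1 !mxE => /(congr1 (fun x => x * (E i j)^-1)).
  by rewrite -mulrA mulrV // mulr1 mul0r.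
move: Hc; rewrite be addr0 => Hc.
have a0 : lsubmx c = 0 by rewrite -[lsubmx c]mulmx1 -HMT mulmxA Hc mul0mx.
by rewrite a0 b0 row_mx0.
Qed.
Lemma sdl1 (D : pzRingType) k a (h : (a < k)%N) (F : 'I_k -> D) :
  \sum_(l < k) ((a == l :> nat)%:R * F l) = F (Ordinal h).
Proof. by rewrite -(sum_deltal (Ordinal h)). Qed.

Lemma sdl0 (D : pzRingType) k a (h : (k <= a)%N) (F : 'I_k -> D) :
  \sum_(l < k) ((a == l :> nat)%:R * F l) = 0.
Proof.
rewrite big1 // => l _; case: eqP => [E|]; last by rewrite mul0r.
by move: (ltn_ord l); rewrite -E ltnNge h.
Qed.

Definition Nsh (D : pzRingType) k : 'M[D]_k := \matrix_(i, j) ((i.+1 == j :> nat)%:R).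
Definition NT (D : pzRingType) k : 'M[D]_k := \matrix_(i, j) ((j.+1 == i :> nat)%:R).
Definition Dg (D : pzRingType) k : 'M[D]_k := diag_mx (\row_(i < k) (i%:R)).
Definition pwl (D : pzRingType) k (A : 'M[D]_k) t := iter t (mulmx A) 1%:M.
Definition pwr (D : pzRingType) k (A : 'M[D]_k) t := iter t (fun X => X *m A) 1%:M.
Definition cm (D : pzRingType) k (X Y : 'M[D]_k) := X *m Y - Y *m X.

Section Facts.
Context (D : pzRingType) (K : nat).
Local Notation k := K.+1.
Local Notation N := (@Nsh D k).
Local Notation T := (@NT D k).
Local Notation E := (delta_mx (@ord_max K) (@ord_max K) : 'M[D]_k).

Lemma F1 : N *m T + E = 1%:M.
Proof.
apply/matrixP => i j; rewrite !mxE.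
under eq_bigr do rewrite !mxE.
case: (ltnP i.+1 k) => h.
  rewrite sdl1 /= eqSS eq_sym.
  have -> : (i == ord_max) = false by apply/negbTE; rewrite -val_eqE /= neq_ltn -ltnS h.
  by rewrite addr0.
rewrite sdl0 // add0r.
have Hi : i = ord_max by apply/val_inj => /=; apply/eqP; rewrite eqn_leq -ltnS ltn_ord.
by rewrite Hi eqxx /= eq_sym.
Qed.

Lemma F2 : E *m N = 0.
Proof.
apply/matrixP => i j; rewrite !mxE.
rewrite big1 // => l _; rewrite !mxE.
case: (l =P ord_max) => [->|]; last by rewrite andbF mul0r.
by rewrite /= eqn_leq leqNgt ltn_ord mulr0.
Qed.

Lemma F2' : T *m E = 0.
Proof.
apply/matrixP => i j; rewrite !mxE.
rewrite big1 // => l _; rewrite !mxE.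
case: (l =P ord_max) => [->|]; last by rewrite mulr0.
by rewrite /= eqn_leq leqNgt ltn_ord mul0r.
Qed.

Lemma F3 t : forall i j, (pwl N t) i j = ((i + t)%N == j :> nat)%:R.
Proof.
elim: t => [|t IH] i j; first by rewrite /pwl /= !mxE addn0.
rewrite /pwl iterS -/(pwl N t) !mxE.
under eq_bigr do rewrite !mxE IH.
case: (ltnP i.+1 k) => h.
  by rewrite sdl1 /= addSnnS.
rewrite sdl0 //; case: eqP => // E'.
by move: (ltn_ord j); rewrite -E' ltnNge (leq_trans h) // -addSnnS leq_addr.
Qed.

Lemma F3k : pwl N k = 0.
Proof.
apply/matrixP => i j; rewrite F3 !mxE.
case: eqP => // E'; by move: (ltn_ord j); rewrite -E' ltnNge leq_addl.
Qed.

Lemma F4 : cm N (Dg D k) = N.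
Proof.
apply/matrixP => i j; rewrite /cm /Dg mul_mx_diag mul_diag_mx !mxE.
case: eqP => [<-|]; last by rewrite !mul0r mulr0 subrr.
by rewrite mul1r mulr1 -addn1 natrD addrC addKr.
Qed.

Lemma F4' : cm (Dg D k) T = T.
Proof.
apply/matrixP => i j; rewrite /cm /Dg mul_mx_diag mul_diag_mx !mxE.
case: eqP => [<-|]; last by rewrite !mul0r mulr0 subrr.
by rewrite mul1r mulr1 -addn1 natrD addrAC subrr add0r.
Qed.

Lemma NTN : N *m T *m N = N.
Proof. by rewrite -[N *m T](addrK E) F1 mulmxBl mul1mx F2 subr0. Qed.

Lemma TNT : T *m (N *m T) = T.
Proof. by rewrite -[N *m T](addrK E) F1 mulmxBr mulmx1 F2' subr0. Qed.

Lemma tele (M : 'M[D]_k) :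
  let V := \sum_(0 <= t < k) (pwl N t *m M *m pwr T t) in
  V - N *m V *m T = M.
Proof.
move=> V.
have -> : N *m V *m T = \sum_(0 <= t < k) (pwl N t.+1 *m M *m pwr T t.+1).
  rewrite /V mulmx_sumr mulmx_suml; apply: eq_bigr => t _.
  by rewrite /pwl /pwr !iterS !mulmxA.
rewrite /V -sumrB.
rewrite (eq_bigr (fun t => - ((pwl N t.+1 *m M *m pwr T t.+1) - (pwl N t *m M *m pwr T t)))).
  by rewrite sumrN telescope_sumr // F3k !mul0mx sub0r opprK /pwl /pwr /= mul1mx mulmx1.
by move=> t _; rewrite opprB.
Qed.

End Facts.

Section Sq.
Context (D : pzRingType) (K : nat).
Local Notation k := K.+2.
Local Notation N := (@Nsh D k).
Local Notation T := (@NT D k).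
Let i0 : 'I_k := ord0.
Let i1 : 'I_k := @Ordinal k 1 isT.
Let im : 'I_k := ord_max.
Local Notation E := (delta_mx im im : 'M[D]_k).

Lemma i01 : i0 != i1. Proof. by []. Qed.
Lemma i0m : i0 != im. Proof. by []. Qed.
Lemma i10 : i1 != i0. Proof. by []. Qed.
Lemma im0 : im != i0. Proof. by []. Qed.

Lemma sqA (B : 'M[D]_k) : exists X1 Y1 Z1 W1 X2 Y2 Z2 W2 L1 L2 : 'M_k,
  B = cm X1 Y1 *m cm Z1 W1 + cm X2 Y2 *m cm Z2 W2 /\
  cm X1 Y1 *m Z1 *m L1 + cm X2 Y2 *m Z2 *m L2 = 1%:M.
Proof.
pose V := \sum_(0 <= t < k) (pwl N t *m (T *m B) *m pwr T t).
have HV := @tele D K.+1 (T *m B).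
exists N, (Dg D k), T, (N *m V), E, (delta_mx im i0), (delta_mx i0 i1), (delta_mx i1 im *m B),
  1%:M, (delta_mx i1 im).
have cE : cm E (delta_mx im i0) = delta_mx im i0.
  by rewrite /cm !mul_delta_mx (mul_delta_mx_0 _ _ _ i0m) subr0.
rewrite F4 cE mulmx1 !mul_delta_mx; split; last by rewrite F1.
rewrite /cm !mulmxBr !mulmxA NTN !mul_delta_mx (mul_delta_mx_0 _ _ _ i01) !mul0mx subr0.
rewrite -!mulmxA -mulmxBr -/V.
rewrite (mulmxA N V T) HV mulmxA -mulmxDl.
by rewrite F1 mul1mx.
Qed.

Lemma sqB (B : 'M[D]_k) : exists X1 Y1 Z1 W1 X2 Y2 Z2 W2 L1 L2 : 'M_k,
  B = cm X1 Y1 *m cm Z1 W1 + cm X2 Y2 *m cm Z2 W2 /\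
  L1 *m Y1 *m cm Z1 W1 + L2 *m Y2 *m cm Z2 W2 = 1%:M.
Proof.
pose V := \sum_(0 <= t < k) (pwl N t *m (B *m N) *m pwr T t).
have HV := @tele D K.+1 (B *m N).
exists (V *m T), N, (Dg D k), T, (B *m delta_mx im i1), (delta_mx i1 i0), (delta_mx i0 im), E,
  1%:M, (delta_mx im i1).
have cE : cm (delta_mx i0 im) E = delta_mx i0 im.
  by rewrite /cm !mul_delta_mx (mul_delta_mx_0 _ _ _ im0) subr0.
rewrite F4' cE mul1mx !mul_delta_mx; split; last by rewrite F1.
rewrite /cm !mulmxBl -!mulmxA TNT !mul_delta_mx (mul_delta_mx_0 _ _ _ i10) !mulmx0 subr0.
have -> : V *m T - N *m (V *m (T *m T)) = (V - N *m V *m T) *m T by rewrite mulmxBl !mulmxA.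
by rewrite HV -mulmxA -mulmxDr F1 mulmx1.
Qed.
End Sq.

Lemma getQB (D : unitRingType) (hD : is_division_ring D) n m (P : 'M[D]_(n, m)) S :
  rows_indep P S -> #|S| = n -> exists Q : 'M_(m, n), P *m Q = 1%:M.
Proof.
move=> HS hS.
have eS : S = setT.
  by apply/eqP; rewrite eqEcard subsetT cardsT card_ord /= hS.
apply: (@L1 D hD n m P) => c Hc; apply: HS Hc => i; by rewrite eS in_setT.
Qed.

Lemma getQA (D : unitRingType) (hD : is_division_ring D) n m (P : 'M[D]_(n, m)) S :
  rows_indep P S -> #|S| = m -> exists Q : 'M_(m, n), Q *m P = 1%:M.
Proof.
move=> HS hS.
pose f (i : 'I_m) : 'I_n := enum_val (cast_ord (esym hS) i).
have finj : injective f.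
  by move=> a b /enum_val_inj /(congr1 val) /= /val_inj.
have fS : forall i, f i \in S by move=> i; apply: enum_valP.
pose Sel : 'M[D]_(m, n) := \matrix_(i, j) (f i == j)%:R.
pose SelT : 'M[D]_(n, m) := \matrix_(j, i) (f i == j)%:R.
have SS : Sel *m SelT = 1%:M.
  apply/matrixP => i j; rewrite !mxE.
  under eq_bigr do rewrite !mxE.
  by rewrite sum_deltal (inj_eq finj) eq_sym.
have Hk : forall c : 'rV_m, c *m (Sel *m P) = 0 -> c = 0.
  move=> c Hc.
  have H0 : c *m Sel = 0.
    apply: HS; last by rewrite -mulmxA.
    move=> j Hj; rewrite mxE big1 // => i _; rewrite mxE.
    case: eqP => [E|]; last by rewrite mulr0.
    by move: Hj; rewrite -E fS.
  by rewrite -[c]mulmx1 -SS mulmxA H0 mul0mx.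
have [T' HT'] := L1 hD Hk.
exists (T' *m Sel); by rewrite -mulmxA (DF hD HT').
Qed.

Lemma sA1 (D : unitRingType) n m (P : 'M[D]_(n, m)) Q (QP : Q *m P = 1%:M) (X Y : 'M_m) :
  sandcomm P (X *m Q) (Y *m Q) = cm X Y *m Q.
Proof.
rewrite /sandcomm /sandmul /cm mulmxBl !mulmxA -!(mulmxA _ Q P) QP !mulmx1.
by [].
Qed.

Lemma sA2g (D : unitRingType) n m (P : 'M[D]_(n, m)) Q (QP : Q *m P = 1%:M) (Z W : 'M_m) U
  (R : 'M_n) (RP : R *m P = 0) :
  sandcomm P (Z *m Q) (W *m Q + U *m R) = cm Z W *m Q + Z *m U *m R.
Proof.
rewrite /sandcomm /sandmul /cm !mulmxDr !mulmxDl !mulmxA -!(mulmxA _ Q P) QP !mulmx1.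
rewrite -!(mulmxA U) RP !mul0mx mulmx0 addr0 mulNmx.
by rewrite addrAC.
Qed.

Lemma sA2 (D : unitRingType) n m (P : 'M[D]_(n, m)) Q (QP : Q *m P = 1%:M) (Z W : 'M_m) U :
  sandcomm P (Z *m Q) (W *m Q + U *m (1%:M - P *m Q)) =
  cm Z W *m Q + Z *m U *m (1%:M - P *m Q).
Proof.
apply: sA2g => //; by rewrite mulmxBl mul1mx -mulmxA QP mulmx1 subrr.
Qed.

Lemma sA3 (D : unitRingType) n m (P : 'M[D]_(n, m)) Q (QP : Q *m P = 1%:M) (H : 'M_m) d :
  sandmul P (H *m Q) d = H *m d.
Proof. by rewrite /sandmul -(mulmxA H Q P) QP mulmx1. Qed.

Lemma sB1g (D : unitRingType) n m (P : 'M[D]_(n, m)) Q (PQ : P *m Q = 1%:M) (X Y : 'M_n) U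
  (R : 'M_m) (PR : P *m R = 0) :
  sandcomm P (Q *m X + R *m U) (Q *m Y) = Q *m cm X Y + R *m U *m Y.
Proof.
rewrite /sandcomm /sandmul /cm !mulmxDr !mulmxDl -!mulmxA.
rewrite !(mulmxA P Q) PQ !mul1mx !(mulmxA P R) PR !mul0mx !mulmx0 addr0 mulmxN.
by rewrite addrAC.
Qed.

Lemma sB1 (D : unitRingType) n m (P : 'M[D]_(n, m)) Q (PQ : P *m Q = 1%:M) (X Y : 'M_n) U :
  sandcomm P (Q *m X + (1%:M - Q *m P) *m U) (Q *m Y) =
  Q *m cm X Y + (1%:M - Q *m P) *m U *m Y.
Proof.
apply: sB1g => //; by rewrite mulmxBr mulmx1 mulmxA PQ mul1mx subrr.
Qed.

Lemma sB2 (D : unitRingType) n m (P : 'M[D]_(n, m)) Q (PQ : P *m Q = 1%:M) (Z W : 'M_n) :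
  sandcomm P (Q *m Z) (Q *m W) = Q *m cm Z W.
Proof.
by rewrite /sandcomm /sandmul /cm mulmxBr -!mulmxA !(mulmxA P) PQ !mul1mx.
Qed.

Lemma sB3 (D : unitRingType) n m (P : 'M[D]_(n, m)) Q (PQ : P *m Q = 1%:M) c (K : 'M_n) :
  sandmul P c (Q *m K) = c *m K.
Proof. by rewrite /sandmul -mulmxA (mulmxA P) PQ mul1mx. Qed.

Theorem theorem2p7 (D : unitRingType) (hD : is_division_ring D)
  (m n : nat) (hm : (2 <= m)%N) (hn : (2 <= n)%N)
  (P : 'M[D]_(n, m)) (r : nat) (hr : div_rank P r) (hrmin : r = minn m n) :
  forall A : 'M[D]_(m, n),
    exists x1 y1 z1 w1 x2 y2 z2 w2 : 'M[D]_(m, n),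
      A = sandmul P (sandcomm P x1 y1) (sandcomm P z1 w1)
        + sandmul P (sandcomm P x2 y2) (sandcomm P z2 w2).
Proof.
case: m hm P hr hrmin => [|[|m]] // _ P hr hrmin.
case: n hn P hr hrmin => [|[|n]] // _ P hr hrmin.
move=> A; case: hr => [[S [HS hS]] _].
case: (leqP m.+2 n.+2) => hmn.
  rewrite hrmin (minn_idPl hmn) in hS.
  have [Q QP] := getQA hD HS hS.
  have [X1 [Y1 [Z1 [W1 [X2 [Y2 [Z2 [W2 [L1 [L2 [eqB eqL]]]]]]]]]]] := sqA (A *m P).
  exists (X1 *m Q), (Y1 *m Q), (Z1 *m Q), (W1 *m Q + (L1 *m A) *m (1%:M - P *m Q)),
    (X2 *m Q), (Y2 *m Q), (Z2 *m Q), (W2 *m Q + (L2 *m A) *m (1%:M - P *m Q)).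
  rewrite !(sA1 QP) !(sA2 QP) !(sA3 QP).
  move eR : (1%:M - P *m Q) => R.
  rewrite !mulmxDr !mulmxA addrACA -!mulmxDl -eqB eqL mul1mx -eR.
  by rewrite mulmxBr mulmx1 mulmxA addrC subrK.
have hnm : (n.+2 <= m.+2)%N by apply: ltnW.
rewrite hrmin (minn_idPr hnm) in hS.
have [Q PQ] := getQB hD HS hS.
have [X1 [Y1 [Z1 [W1 [X2 [Y2 [Z2 [W2 [L1 [L2 [eqB eqL]]]]]]]]]]] := sqB (P *m A).
exists (Q *m X1 + (1%:M - Q *m P) *m (A *m L1)), (Q *m Y1), (Q *m Z1), (Q *m W1),
  (Q *m X2 + (1%:M - Q *m P) *m (A *m L2)), (Q *m Y2), (Q *m Z2), (Q *m W2).
rewrite !(sB1 PQ) !(sB2 PQ) !(sB3 PQ).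
move eR : (1%:M - Q *m P) => R.
rewrite !mulmxDl -!mulmxA addrACA -!mulmxDr.
rewrite -!mulmxA in eqL; rewrite eqL mulmx1 -eqB.
by rewrite -eR mulmxBl mul1mx mulmxA addrC subrK.
Qed.
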